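(* Let $\mathcal{O}_K$ be a Henselian discrete valuation domain with field of fractions $K$ and algebraically closed residue field of characteristic $2$, with normalized valuation $v$. Let $u$ be an integer with $0<u<v(2)$. Then there exists an elliptic curve $E/K$ with good supersingular reduction such that $v(j(E))=12u$.
   Context: $v(0)=\infty$, so $v(2)=\infty$ when $\operatorname{char}K=2$. *)

(* Defs.v *)
From HB Require Import structures.
From mathcomp Require Import all_boot all_order all_algebra.
Set Implicit Arguments. Unset Strict Implicit. Unset Printing Implicit Defensive.
Import Order.TTheory GRing.Theory Num.Theory.
Local Open Scope ring_scope.

(* A normalized discrete valuation on K, recorded on nonzero elements only;
   by convention v(0) = +oo (so v is never consulted at 0). *)
Definition is_normalized_dval (K : fieldType) (v : K -> int) : Prop :=
  [/\ forall x y : K, x != 0 -> y != 0 -> v (x * y) = v x + v y,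
      forall x y : K, x != 0 -> y != 0 -> x + y != 0 ->
        Order.min (v x) (v y) <= v (x + y)
    & exists pi : K, pi != 0 /\ v pi = 1].

Definition in_O (K : fieldType) (v : K -> int) (x : K) : Prop := x = 0 \/ 0 <= v x.
Definition in_m (K : fieldType) (v : K -> int) (x : K) : Prop := x = 0 \/ 0 < v x.

(* red : K -> k realizes k as the residue field O_K / m_K :
   restricted to O_K it is a surjective ring morphism with kernel m_K. *)
Definition is_residue_map (K : fieldType) (k : fieldType) (v : K -> int)
    (red : K -> k) : Prop :=
  [/\ forall x y, in_O v x -> in_O v y -> red (x + y) = red x + red y,
      forall x y, in_O v x -> in_O v y -> red (x * y) = red x * red y,
      red 1 = 1,
      forall z : k, exists2 x, in_O v x & red x = z
    & forall x, in_O v x -> (red x = 0 <-> in_m v x)].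

Definition henselian (K : fieldType) (v : K -> int) : Prop :=
  forall (p : {poly K}) (a0 : K),
    (forall i, in_O v p`_i) -> in_O v a0 ->
    in_m v p.[a0] -> ~ in_m v (p^`()).[a0] ->
    exists a : K, [/\ in_O v a, p.[a] = 0 & in_m v (a - a0)].

Record wcurve (R : Type) := WCurve { wa1 : R; wa2 : R; wa3 : R; wa4 : R; wa6 : R }.

Section Weierstrass.
Variable R : comNzRingType.
Variable E : wcurve R.
Local Notation a1 := (wa1 E). Local Notation a2 := (wa2 E).
Local Notation a3 := (wa3 E). Local Notation a4 := (wa4 E).
Local Notation a6 := (wa6 E).

Definition wb2 : R := a1 ^+ 2 + 4 * a2.
Definition wb4 : R := 2 * a4 + a1 * a3.
Definition wb6 : R := a3 ^+ 2 + 4 * a6.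
Definition wb8 : R := a1 ^+ 2 * a6 + 4 * a2 * a6 - a1 * a3 * a4
                      + a2 * a3 ^+ 2 - a4 ^+ 2.
Definition wc4 : R := wb2 ^+ 2 - 24 * wb4.
Definition disc : R :=
  - wb2 ^+ 2 * wb8 - 8 * wb4 ^+ 3 - 27 * wb6 ^+ 2 + 9 * wb2 * wb4 * wb6.

Definition on_curve (x y : R) : Prop :=
  y ^+ 2 + a1 * x * y + a3 * y = x ^+ 3 + a2 * x ^+ 2 + a4 * x + a6.

(* E[2] = {O}: no affine point P satisfies P = -P,
   where -(x,y) = (x, -y - a1 x - a3). *)
Definition two_torsion_trivial : Prop :=
  forall x y : R, on_curve x y -> y <> - y - a1 * x - a3.
End Weierstrass.

Definition jinv (K : fieldType) (E : wcurve K) : K := wc4 E ^+ 3 / disc E.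

(* The Weierstrass model obtained by x = u^2 x' + r, y = u^3 y' + s u^2 x' + t
   (Silverman, Table 3.1). *)
Definition wchange (K : fieldType) (E : wcurve K) (u r s t : K) : wcurve K :=
  let a1 := wa1 E in let a2 := wa2 E in let a3 := wa3 E in
  let a4 := wa4 E in let a6 := wa6 E in
  WCurve ((a1 + 2 * s) / u)
         ((a2 - s * a1 + 3 * r - s ^+ 2) / u ^+ 2)
         ((a3 + r * a1 + 2 * t) / u ^+ 3)
         ((a4 - s * a3 + 2 * r * a2 - (t + r * s) * a1 + 3 * r ^+ 2
             - 2 * s * t) / u ^+ 4)
         ((a6 + r * a4 + r ^+ 2 * a2 + r ^+ 3 - t * a3 - t ^+ 2
             - r * t * a1) / u ^+ 6).

Definition wmap (A B : Type) (f : A -> B) (E : wcurve A) : wcurve B :=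
  WCurve (f (wa1 E)) (f (wa2 E)) (f (wa3 E)) (f (wa4 E)) (f (wa6 E)).

Definition wintegral (K : fieldType) (v : K -> int) (E : wcurve K) : Prop :=
  [/\ in_O v (wa1 E), in_O v (wa2 E), in_O v (wa3 E), in_O v (wa4 E)
    & in_O v (wa6 E)].

(* E/K has good supersingular reduction (residue characteristic 2, residue
   field algebraically closed): some K-isomorphic Weierstrass model is
   integral with unit discriminant, and its reduction E~ over k satisfies
   E~[2] = 0, i.e. E~ is supersingular. *)
Definition good_supersingular_reduction (K : fieldType) (k : fieldType)
    (v : K -> int) (red : K -> k) (E : wcurve K) : Prop :=
  exists u r s t : K,
    [/\ u != 0,
        wintegral v (wchange E u r s t),
        disc (wchange E u r s t) != 0 /\ v (disc (wchange E u r s t)) = 0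
      & two_torsion_trivial (wmap red (wchange E u r s t))].

(* Main.v *)
Require Import Defs.
From HB Require Import structures.
From mathcomp Require Import all_boot all_order all_algebra.
From mathcomp Require Import ring zify.
Import Order.TTheory GRing.Theory Num.Theory.
Local Open Scope ring_scope.
Set Implicit Arguments. Unset Strict Implicit.

Section Aux.
Variables (K : fieldType) (v : K -> int).
Hypothesis hv : is_normalized_dval v.

Lemma v1 : v 1 = 0.
Proof. case: hv => vM _ _; have := vM 1 1 (oner_neq0 _) (oner_neq0 _).
rewrite mulr1 => h; lia. Qed.

Lemma vN1 : v (-1) = 0.
Proof. case: hv => vM _ _.
have n1 : (-1 : K) != 0 by rewrite oppr_eq0 oner_neq0.
have := vM _ _ n1 n1; rewrite mulrNN mulr1 v1 => h; lia. Qed.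

Lemma vN x : x != 0 -> v (- x) = v x.
Proof. case: hv => vM _ _ => xn.
have n1 : (-1 : K) != 0 by rewrite oppr_eq0 oner_neq0.
by rewrite -mulN1r vM // vN1 add0r. Qed.

Lemma vX x n : x != 0 -> v (x ^+ n) = n%:Z * v x.
Proof. case: hv => vM _ _ => xn; elim: n => [|n IH]; first by rewrite expr0 v1 mul0r.
rewrite exprS vM ?expf_neq0 // IH; lia. Qed.

Lemma vstrict x y : x != 0 -> y != 0 -> v x < v y -> x + y != 0 /\ v (x + y) = v x.
Proof. case: hv => vM vA _ => xn yn lt.
have s : x + y != 0.
  apply/negP => /eqP h. have : y = - x by apply/eqP; rewrite -addr_eq0 addrC h.
  move=> e; move: lt; rewrite e vN // ltxx //.
split => //.
have h1 := vA _ _ xn yn s.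
have nyn : - y != 0 by rewrite oppr_eq0.
have h2 := vA _ _ s nyn; rewrite addrK in h2; have := h2 xn.
rewrite vN // => h3.
have e : Order.min (v x) (v y) = v x by apply: min_l; exact: ltW.
rewrite e in h1; rewrite ge_min in h3.
case/orP: h3 => h3; last by move: lt; rewrite ltNge h3.
by apply/eqP; rewrite eq_le h1 h3.
Qed.
End Aux.

Section Aux2.
Variables (K : fieldType) (v : K -> int) (k : fieldType) (red : K -> k).
Hypothesis hv : is_normalized_dval v.
Hypothesis hr : is_residue_map v red.

Lemma natO n : in_O v (n%:R : K).
Proof.
elim: n => [|n IH]; first by left.
have [e|ne] := eqVneq (n.+1%:R : K) 0; first by left.
right; rewrite -addn1 natrD mulr1n.
have [e0|ne0] := eqVneq (n%:R : K) 0; first by rewrite e0 add0r (v1 hv).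
case: hv => _ vA _.
have ne' : (n%:R + 1 : K) != 0 by move: ne; rewrite -addn1 natrD mulr1n.
have := vA _ _ ne0 (oner_neq0 _) ne'.
rewrite (v1 hv); case: IH => [/eqP|]; first by rewrite (negbTE ne0).
move=> h0 h; apply: le_trans h; rewrite le_min h0 //.
Qed.

Lemma red_nat n : red n%:R = n%:R.
Proof.
case: hr => rD _ r1 _ _.
elim: n => [|n IH].
  have := rD 0 0 (or_introl erefl) (or_introl erefl); rewrite addr0 => h.
  exact: (addrI _ (etrans (esym h) (esym (addr0 _)))).
by rewrite -addn1 !natrD rD ?IH ?r1 //; [exact: natO | right; rewrite (v1 hv)].
Qed.

Lemma unit_v0 x : in_O v x -> red x != 0 -> x != 0 /\ v x = 0.
Proof.
case: hr => _ _ _ _ rk hO hn.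
have nm : ~ in_m v x by move/(rk x hO) => h; move: hn; rewrite h eqxx.
have xn : x != 0 by apply/eqP => e; apply: nm; left.
split => //; case: hO => [e|h]; first by move: xn; rewrite e eqxx.
apply/eqP; rewrite eq_le h andbT leNgt; apply/negP => h'; apply: nm; by right.
Qed.

Lemma red_m x : in_O v x -> in_m v x -> red x = 0.
Proof. by case: hr => _ _ _ _ rk hO hm; apply/(rk x hO). Qed.
End Aux2.

Lemma wchange_id (K : fieldType) (E : wcurve K) : wchange E 1 0 0 0 = E.
Proof.
case: E => a1 a2 a3 a4 a6; rewrite /wchange /= !expr1n !divr1.
congr WCurve; ring.
Qed.

Theorem lemma2p12 (K : fieldType) (v : K -> int) (k : closedFieldType)
    (red : K -> k) (u : int) :
  is_normalized_dval v -> is_residue_map v red -> henselian v ->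
  (2%N \in [pchar k]) ->
  0 < u -> ((2 : K) = 0 \/ u < v 2) ->
  exists E : wcurve K,
    [/\ disc E != 0,
        good_supersingular_reduction v red E,
        jinv E != 0
      & v (jinv E) = 12 * u].
Proof.
move=> hv hr _ ch2 u0 h2.
have c2 : (2%:R : k) = 0 := pcharf0 ch2.
case: u u0 h2 => [n|n] // n0 h2.
have hv' := hv; case: hv' => vM vA [pi [pin vpi]].
set a := pi ^+ n.
have an : a != 0 by rewrite expf_neq0.
have va : v a = n by rewrite /a (vX hv) // vpi mulr1.
set E := WCurve a 0 1 0 0.
have dE : disc E = - 27%:R + a ^+ 3 by rewrite /disc /wb2 /wb4 /wb6 /wb8 /=; ring.
have cE : wc4 E = a * (a ^+ 3 - 24%:R) by rewrite /wc4 /wb2 /wb4 /=; ring.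
have r27 : red (27%:R) != 0.
  rewrite (red_nat hv hr) (_ : 27 = 1 + 2 * 13)%N // natrD natrM c2 mul0r addr0.
  exact: oner_neq0.
have [n27 v27] := unit_v0 hr (natO hv 27) r27.
have r3 : red (3%:R) != 0.
  rewrite (red_nat hv hr) (_ : 3 = 1 + 2)%N // natrD c2 addr0.
  exact: oner_neq0.
have [n3 v3] := unit_v0 hr (natO hv 3) r3.
have va3 : v (a ^+ 3) = 3 * n%:Z by rewrite (vX hv) // va.
have a3n : a ^+ 3 != 0 by rewrite expf_neq0.
have [dn vd] : disc E != 0 /\ v (disc E) = 0.
  rewrite dE; have n27' : - 27%:R != 0 :> K by rewrite oppr_eq0.
  have := vstrict hv n27' a3n; rewrite (vN hv) // v27 va3 => /(_ _) [|-> ->] //.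
  by apply: mulr_gt0.
have [bn vb] : a ^+ 3 - 24%:R != 0 /\ v (a ^+ 3 - 24%:R) = 3 * n%:Z.
  have [e|ne] := eqVneq (2 : K) 0.
    have -> : (24%:R : K) = 0 by rewrite (_ : 24 = 2 * 12)%N // natrM e mul0r.
    by rewrite subr0.
  case: h2 => [e|lt]; first by move: ne; rewrite e eqxx.
  have e24 : (24%:R : K) = 2 * 2 * 2 * 3%:R by rewrite -!natrM.
  have p24 : (24%:R : K) != 0 by rewrite e24 !mulf_neq0.
  have n24 : - 24%:R != 0 :> K by rewrite oppr_eq0.
  have v24 : v (- 24%:R) = 3 * v 2.
    rewrite (vN hv p24) e24 !vM ?mulf_neq0 // v3; lia.
  have := vstrict hv a3n n24; rewrite va3 v24 => /(_ _) [|-> ->] //.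
  rewrite ltr_pM2l //.
have cn : wc4 E != 0 by rewrite cE mulf_neq0.
exists E; split => //.
- exists 1, 0, 0, 0; rewrite wchange_id; split.
  + exact: oner_neq0.
  + split; [right; rewrite va //| left | right; rewrite (v1 hv) // | left | left] => //.
  + by [].
  + move=> x y _ /=.
    have ra : red a = 0 by apply: (red_m hr); right; rewrite va.
    have r1 : red 1 = 1 by case: hr.
    rewrite ra r1 mul0r subr0 => H.
    have h2y : y + y = 0 by rewrite -mulr2n -mulr_natl c2 mul0r.
    have : (1 : k) = (y - (- y - 1)) - (y + y) by ring.
    by rewrite -H subrr h2y subr0; apply/eqP; exact: oner_neq0.
- by rewrite /jinv mulf_neq0 ?invr_eq0 ?expf_neq0.
- rewrite /jinv vM ?invr_eq0 ?expf_neq0 //.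
  have vi : v (disc E)^-1 = 0.
    have := vM _ _ dn (invr_neq0 dn); rewrite divff // (v1 hv) vd; lia.
  rewrite vi (vX hv) // cE vM // va vb; lia.
Qed.
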